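(* If $t\in\mathtt T_J$ is typable in $\cap J$ (i.e. $\Gamma\vdash t:\sigma$ for some $\Gamma,\sigma$), then $t$ is strongly normalizing for $\to_\beta\cup\to_\pi$.
   Context: Terms $\mathtt T_J$: $t,u,r ::= x \mid \lambda x.t \mid t(u,y.r)$ ($y$ bound in $r$), up to $\alpha$-equivalence; $\{u/x\}t$ capture-avoiding substitution. Rules of $\Lambda J$: $\beta$: $(\lambda x.t)(u,y.r)\mapsto\{\{u/x\}t/y\}r$; $\pi$: $t(u,x.r)(u',y.r')\mapsto t(u,x.r(u',y.r'))$ (with $x\notin\mathrm{fv}(u')\cup\mathrm{fv}(r')$); $\to_\beta,\to_\pi$ their closures under all contexts. System $\cap J$: types $\sigma,\tau ::= \alpha \mid \mathcal M\to\sigma$, $\mathcal M=[\sigma_i]_{i\in I}$ a finite possibly empty multiset; $\sqcup$ multiset union; environments map variables to multisets, $\wedge$ pointwise union, $\Gamma;x:\mathcal M$ extension with $x\notin\mathrm{dom}\,\Gamma$. $\mathrm{ch}(\mathcal M)=\mathcal M$ if $\mathcal M\ne[\,]$, $\mathrm{ch}([\,])=[\tau]$ for an arbitrary $\tau$. Rules: (var) $x:[\sigma]\vdash x:\sigma$; (abs) from $\Gamma;x:\mathcal M\vdash t:\sigma$ infer $\Gamma\vdash\lambda x.t:\mathcal M\to\sigma$; (many) from $(\Gamma_i\vdash t:\sigma_i)_{i\in I}$, $I\ne\emptyset$, infer $\wedge_i\Gamma_i\vdash t:[\sigma_i]_{i\in I}$; (app) from $\Gamma\vdash t:\mathrm{ch}([\mathcal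 M_i\to\tau_i]_{i\in I})$, $\Delta\vdash u:\mathrm{ch}(\sqcup_i\mathcal M_i)$, $\Lambda;y:[\tau_i]_{i\in I}\vdash r:\sigma$ infer $\Gamma\wedge\Delta\wedge\Lambda\vdash t(u,y.r):\sigma$. *)

(* Defs.v *)
(* Terms of Lambda J with de Bruijn indices (alpha-equivalence
   built in), reductions ->beta, ->pi, and the non-idempotent intersection
   type system cap J, with multisets represented as lists up to permutation. *)
From Stdlib Require Import List Arith Permutation.
Import ListNotations.

(* Var n | Lam t (binds 0 in t) | App t u r  = t(u, y.r), binds 0 in r *)
Inductive tm : Type :=
| Var : nat -> tm
| Lam : tm -> tm
| App : tm -> tm -> tm -> tm.

Fixpoint lift (k c : nat) (t : tm) : tm :=
  match t with
  | Var m => if m <? c then Var m else Var (m + k)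
  | Lam t1 => Lam (lift k (S c) t1)
  | App t1 t2 r => App (lift k c t1) (lift k c t2) (lift k (S c) r)
  end.

Fixpoint subst (n : nat) (u : tm) (t : tm) : tm :=
  match t with
  | Var m => if m <? n then Var m
             else if m =? n then lift n 0 u
             else Var (m - 1)
  | Lam t1 => Lam (subst (S n) u t1)
  | App t1 t2 r => App (subst n u t1) (subst n u t2) (subst (S n) u r)
  end.

Inductive step : tm -> tm -> Prop :=
| step_beta : forall t u r,
    (* (\x.t)(u, y.r) |-> {{u/x}t / y} r *)
    step (App (Lam t) u r) (subst 0 (subst 0 u t) r)
| step_pi : forall t u r u' r',
    (* t(u,x.r)(u',y.r') |-> t(u, x.r(u',y.r')), x fresh for u', r' *)
    step (App (App t u r) u' r') (App t u (App r (lift 1 0 u') (lift 1 1 r')))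
| step_lam : forall t t', step t t' -> step (Lam t) (Lam t')
| step_app1 : forall t t' u r, step t t' -> step (App t u r) (App t' u r)
| step_app2 : forall t u u' r, step u u' -> step (App t u r) (App t u' r)
| step_app3 : forall t u r r', step r r' -> step (App t u r) (App t u r').

Definition SN (t : tm) : Prop := Acc (fun b a => step a b) t.

Inductive ty : Type :=
| TVar : nat -> ty
| Arr : list ty -> ty -> ty.

Definition mty := list ty.

Inductive ty_eqv : ty -> ty -> Prop :=
| eqv_tvar : forall a, ty_eqv (TVar a) (TVar a)
| eqv_arr : forall M N M' s s',
    Permutation M N -> Forall2 ty_eqv N M' -> ty_eqv s s' ->
    ty_eqv (Arr M s) (Arr M' s').

Definition mty_eqv (M M' : mty) : Prop :=
  exists N, Permutation M N /\ Forall2 ty_eqv N M'.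

(* environments: total maps, x notin dom G iff G x = [] *)
Definition env := nat -> mty.
Definition env_eqv (G G' : env) : Prop := forall x, mty_eqv (G x) (G' x).
Definition env_union (G D : env) : env := fun x => G x ++ D x.
Definition env_single (x : nat) (s : ty) : env :=
  fun y => if y =? x then [s] else [].
(* G ; 0 : M  (the bound variable 0 is fresh for the shifted G) *)
Definition env_ext (M : mty) (G : env) : env :=
  fun y => match y with 0 => M | S y' => G y' end.

Definition is_ch (M N : mty) : Prop :=
  (M <> [] /\ N = M) \/ (M = [] /\ exists tau, N = [tau]).

Inductive typ : env -> tm -> ty -> Prop :=
| typ_var : forall x s, typ (env_single x s) (Var x) s
| typ_abs : forall G M t s, typ (env_ext M G) t s -> typ G (Lam t) (Arr M s)
| typ_app : forall (G D L : env) t u r s (As : list (mty * ty)) Mt Mu,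
    (* As = [(M_i, tau_i)]_{i in I} *)
    is_ch (map (fun p => Arr (fst p) (snd p)) As) Mt ->
    typm G t Mt ->
    is_ch (concat (map fst As)) Mu ->
    typm D u Mu ->
    typ (env_ext (map snd As) L) r s ->
    typ (env_union G (env_union D L)) (App t u r) s
(* judgments are taken up to multiset equality *)
| typ_conv : forall G G' t s s',
    typ G t s -> env_eqv G G' -> ty_eqv s s' -> typ G' t s'
with typm : env -> tm -> mty -> Prop :=
(* rule (many), with nonempty I, built one premise at a time *)
| typm_one : forall G t s, typ G t s -> typm G t [s]
| typm_cons : forall G D t s M,
    typ G t s -> typm D t M -> typm (env_union G D) t (s :: M)
| typm_conv : forall G G' t M M',
    typm G t M -> env_eqv G G' -> mty_eqv M M' -> typm G' t M'.

(* Main.v *)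
Require Import Defs.
From Stdlib Require Import List Arith Permutation Lia ClassicalEpsilon.
Import ListNotations.

Definition ty_ind2 (P : ty -> Prop) (HV : forall n, P (TVar n))
  (HA : forall M s, Forall P M -> P s -> P (Arr M s)) : forall t, P t :=
  fix F t := match t with
  | TVar n => HV n
  | Arr M s => HA M s ((fix G (l : list ty) : Forall P l :=
        match l with [] => Forall_nil P | x :: l' => Forall_cons x (F x) (G l') end) M) (F s)
  end.

Lemma Forall2_flip {A B} (R : A -> B -> Prop) l1 l2 :
  Forall2 R l1 l2 -> Forall2 (fun b a => R a b) l2 l1.
Proof. induction 1; constructor; auto. Qed.

Lemma Forall2_perm_r {A B} (R : A -> B -> Prop) l1 l2 l3 :
  Forall2 R l1 l2 -> Permutation l2 l3 -> exists l1', Permutation l1 l1' /\ Forall2 R l1' l3.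
Proof.
  intros H P. apply Forall2_flip in H.
  destruct (Permutation_Forall2 P H) as [l1' [P' H']].
  exists l1'. split; auto. apply Forall2_flip in H'. exact H'.
Qed.

Lemma Forall_perm {A} (P : A -> Prop) l l' : Permutation l l' -> Forall P l -> Forall P l'.
Proof. intros H F. rewrite Forall_forall in *. intros x Hx. apply F. eapply Permutation_in; [apply Permutation_sym; exact H|exact Hx]. Qed.

Lemma arr_inv M s b : ty_eqv (Arr M s) b ->
  exists N M' s', b = Arr M' s' /\ Permutation M N /\ Forall2 ty_eqv N M' /\ ty_eqv s s'.
Proof. intro H. inversion H; subst. eexists _, _, _; eauto. Qed.

Lemma ty_eqv_refl : forall a, ty_eqv a a.
Proof.
  apply ty_ind2.
  - constructor.
  - intros M s HM Hs. econstructor; [apply Permutation_refl| |exact Hs].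
    induction HM; constructor; auto.
Qed.

Lemma ty_eqv_sym : forall a b, ty_eqv a b -> ty_eqv b a.
Proof.
  intro a. revert a. apply (ty_ind2 (fun a => forall b, ty_eqv a b -> ty_eqv b a)).
  - intros n b H. inversion H; subst. constructor.
  - intros M s HM Hs b H. destruct (arr_inv _ _ _ H) as [N [M' [s' [-> [H2 [H4 H5]]]]]].
    assert (HN : Forall (fun a => forall b, ty_eqv a b -> ty_eqv b a) N) by (eapply Forall_perm; eauto).
    assert (F : Forall2 ty_eqv M' N).
    { clear -H4 HN. induction H4; constructor; inversion HN; subst; auto. }
    destruct (Forall2_perm_r _ _ _ _ F (Permutation_sym H2)) as [Z [PZ FZ]].
    econstructor; eauto.
Qed.

Lemma ty_eqv_trans : forall a b c, ty_eqv a b -> ty_eqv b c -> ty_eqv a c.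
Proof.
  intro a. revert a. apply (ty_ind2 (fun a => forall b c, ty_eqv a b -> ty_eqv b c -> ty_eqv a c)).
  - intros n b c H1 H2. inversion H1; subst. exact H2.
  - intros M s HM Hs b c H1 H2. destruct (arr_inv _ _ _ H1) as [N [M' [s' [-> [H2' [H4 H5]]]]]].
    destruct (arr_inv _ _ _ H2) as [N1 [M'0 [s'' [-> [H3 [H6 H7]]]]]].
    destruct (Forall2_perm_r _ _ _ _ H4 H3) as [Z [PZ FZ]].
    assert (HZ : Forall (fun a => forall b c, ty_eqv a b -> ty_eqv b c -> ty_eqv a c) Z)
      by (eapply Forall_perm; [|exact HM]; eapply perm_trans; eauto).
    econstructor; [eapply perm_trans; eauto| |eauto].
    clear -FZ H6 HZ. revert M'0 H6. induction FZ; intros M2 F2; inversion F2; subst; constructor;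
      inversion HZ; subst; eauto.
Qed.

Definition eqvb (a b : ty) : bool := if excluded_middle_informative (ty_eqv a b) then true else false.

Lemma eqvb_true a b : eqvb a b = true <-> ty_eqv a b.
Proof. unfold eqvb. destruct excluded_middle_informative; split; auto; discriminate. Qed.

Lemma eqvb_compat a b c : ty_eqv b c -> eqvb a b = eqvb a c.
Proof.
  intro H. unfold eqvb. destruct excluded_middle_informative as [h1|h1];
  destruct excluded_middle_informative as [h2|h2]; auto.
  - exfalso; apply h2; eapply ty_eqv_trans; eauto.
  - exfalso; apply h1; eapply ty_eqv_trans; eauto using ty_eqv_sym.
Qed.

Lemma eqvb_compat_l a a' b : ty_eqv a a' -> eqvb a b = eqvb a' b.
Proof.
  intro H. unfold eqvb. destruct excluded_middle_informative as [h1|h1];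
  destruct excluded_middle_informative as [h2|h2]; auto.
  - exfalso; apply h2; eapply ty_eqv_trans; eauto using ty_eqv_sym.
  - exfalso; apply h1; eapply ty_eqv_trans; eauto using ty_eqv_sym.
Qed.

Fixpoint cnt (a : ty) (M : list ty) : nat :=
  match M with [] => 0 | b :: M' => (if eqvb a b then 1 else 0) + cnt a M' end.

Lemma cnt_app a M N : cnt a (M ++ N) = cnt a M + cnt a N.
Proof. induction M; simpl; auto. rewrite IHM. lia. Qed.

Lemma cnt_perm a M N : Permutation M N -> cnt a M = cnt a N.
Proof. induction 1; simpl; lia. Qed.

Lemma cnt_F2 a M N : Forall2 ty_eqv M N -> cnt a M = cnt a N.
Proof. induction 1; simpl; auto. rewrite (eqvb_compat a x y H). lia. Qed.

Lemma mty_eqv_cnt M N : mty_eqv M N -> forall a, cnt a M = cnt a N.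
Proof. intros [Z [P F]] a. rewrite (cnt_perm a _ _ P). apply cnt_F2; auto. Qed.

Lemma cnt_split b N : cnt b N > 0 -> exists N1 c N2, N = N1 ++ c :: N2 /\ ty_eqv b c.
Proof.
  induction N as [|c N IH]; simpl; intro H. lia.
  destruct (eqvb b c) eqn:E.
  - exists [], c, N. split; auto. apply eqvb_true; auto.
  - destruct IH as [N1 [c' [N2 [-> Hb]]]]. lia. exists (c :: N1), c', N2. split; auto.
Qed.

Lemma cnt_mty_eqv M : forall N, (forall a, cnt a M = cnt a N) -> mty_eqv M N.
Proof.
  induction M as [|b M IH]; intros N H.
  - destruct N as [|c N]. exists []; split; constructor.
    specialize (H c). simpl in H. assert (eqvb c c = true) by (apply eqvb_true, ty_eqv_refl).
    rewrite H0 in H. lia.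
  - assert (Hb : cnt b N > 0).
    { rewrite <- H. simpl. assert (eqvb b b = true) by (apply eqvb_true, ty_eqv_refl). rewrite H0; lia. }
    destruct (cnt_split _ _ Hb) as [N1 [c [N2 [-> Hbc]]]].
    destruct (IH (N1 ++ N2)) as [K [PK FK]].
    { intro a. specialize (H a). simpl in H. rewrite !cnt_app in *. simpl in H.
      rewrite (eqvb_compat a b c Hbc) in H. lia. }
    destruct (Forall2_perm_r _ _ _ _ (Forall2_cons b c Hbc FK) (Permutation_middle N1 N2 c)) as [Z [PZ FZ]].
    exists Z. split; auto. eapply perm_trans; [|exact PZ]. constructor; auto.
Qed.

Lemma mty_eqv_iff M N : mty_eqv M N <-> forall a, cnt a M = cnt a N.
Proof. split; [apply mty_eqv_cnt|apply cnt_mty_eqv]. Qed.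

Lemma mty_eqv_nil M : mty_eqv M [] -> M = [].
Proof.
  intro H. destruct M as [|b M]; auto. rewrite mty_eqv_iff in H. specialize (H b). simpl in H.
  assert (eqvb b b = true) by (apply eqvb_true, ty_eqv_refl). rewrite H0 in H. lia.
Qed.

Definition env_le (G G' : env) : Prop := forall x a, cnt a (G x) <= cnt a (G' x).

Lemma env_eqv_iff G G' : env_eqv G G' <-> forall x a, cnt a (G x) = cnt a (G' x).
Proof. unfold env_eqv. split; intros H x; [apply mty_eqv_iff; auto| apply mty_eqv_iff; auto]. Qed.

Definition empty_env : env := fun _ => [].
Definition shift (k c : nat) (G : env) : env :=
  fun y => if y <? c then G y else if y <? c + k then [] else G (y - k).
Definition down (k : nat) (G : env) : env := fun y => if y <? k then G y else G (S y).
Definition arrows (As : list (mty * ty)) : list ty := map (fun p => Arr (fst p) (snd p)) As.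

Inductive T : env -> tm -> ty -> nat -> Prop :=
| Tvar : forall x s, T (env_single x s) (Var x) s 1
| Tabs : forall G M t s n, T (env_ext M G) t s n -> T G (Lam t) (Arr M s) (S n)
| Tapp : forall G D L t u r s As Mt Mu n1 n2 n3,
    is_ch (arrows As) Mt -> TL G t Mt n1 ->
    is_ch (concat (map fst As)) Mu -> TL D u Mu n2 ->
    T (env_ext (map snd As) L) r s n3 ->
    T (env_union G (env_union D L)) (App t u r) s (S (n1 + n2 + n3))
| Tconv : forall G G' t s s' n, T G t s n -> env_eqv G G' -> ty_eqv s s' -> T G' t s' n
| Tweak : forall G H t s n, T G t s n -> T (env_union G H) t s n
with TL : env -> tm -> list ty -> nat -> Prop :=
| TLnil : forall G t, TL G t [] 0
| TLcons : forall G G1 G2 t s M n1 n2, env_eqv G (env_union G1 G2) -> T G1 t s n1 ->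
    TL G2 t M n2 -> TL G t (s :: M) (n1 + n2).

Scheme T_mind := Induction for T Sort Prop with TL_mind := Induction for TL Sort Prop.
Combined Scheme T_TL_mind from T_mind, TL_mind.

Ltac envs :=
  first [apply env_eqv_iff | unfold env_le];
  let x := fresh "x" in let a := fresh "a" in intros x a;
  repeat match goal with
  | H : env_eqv _ _ |- _ => rewrite env_eqv_iff in H; specialize (H x a)
  | H : env_le _ _ |- _ => unfold env_le in H; specialize (H x a)
  end;
  unfold env_union, empty_env in *; cbv beta in *; rewrite ?cnt_app in *; simpl cnt in *; lia.

Lemma env_eqv_refl G : env_eqv G G. Proof. envs. Qed.
Lemma env_eqv_sym G G' : env_eqv G G' -> env_eqv G' G. Proof. intros; envs. Qed.
Lemma env_eqv_trans G1 G2 G3 : env_eqv G1 G2 -> env_eqv G2 G3 -> env_eqv G1 G3. Proof. intros; envs. Qed.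
Lemma env_le_refl G : env_le G G. Proof. envs. Qed.
Lemma env_le_trans G1 G2 G3 : env_le G1 G2 -> env_le G2 G3 -> env_le G1 G3. Proof. intros; envs. Qed.
Lemma env_eqv_le G G' : env_eqv G G' -> env_le G G'. Proof. intros; envs. Qed.

Lemma env_eqv_pw G G' : (forall y, G y = G' y) -> env_eqv G G'.
Proof. intro H. apply env_eqv_iff. intros x a. rewrite H. auto. Qed.

Fixpoint rem (b : ty) (N : list ty) : list ty :=
  match N with [] => [] | c :: N' => if eqvb b c then N' else c :: rem b N' end.
Fixpoint diff (N M : list ty) : list ty :=
  match M with [] => N | b :: M' => diff (rem b N) M' end.

Lemma cnt_rem a b N : cnt b N > 0 -> cnt a (rem b N) + (if eqvb a b then 1 else 0) = cnt a N.
Proof.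
  induction N as [|c N IH]; simpl; intro H. lia.
  destruct (eqvb b c) eqn:E.
  - apply eqvb_true in E. rewrite (eqvb_compat a b c E). lia.
  - simpl. rewrite <- IH by lia. lia.
Qed.

Lemma cnt_diff M : forall N, (forall a, cnt a M <= cnt a N) -> forall a, cnt a (diff N M) + cnt a M = cnt a N.
Proof.
  induction M as [|b M IH]; intros N H a; simpl. lia.
  assert (Hb : cnt b N > 0).
  { specialize (H b). simpl in H. assert (eqvb b b = true) by (apply eqvb_true, ty_eqv_refl). rewrite H0 in H; lia. }
  assert (H1 : forall a, cnt a M <= cnt a (rem b N)).
  { intro a'. specialize (H a'). simpl in H. pose proof (cnt_rem a' b N Hb). lia. }
  specialize (IH _ H1 a). pose proof (cnt_rem a b N Hb). lia.
Qed.

Definition env_diff (G' G : env) : env := fun x => diff (G' x) (G x).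

Lemma env_diff_spec G G' : env_le G G' -> env_eqv G' (env_union G (env_diff G' G)).
Proof.
  intro H. apply env_eqv_iff. intros x a. unfold env_union, env_diff. rewrite cnt_app.
  pose proof (cnt_diff (G x) (G' x) (fun a => H x a) a). lia.
Qed.

Lemma T_weak G G' t s n : T G t s n -> env_le G G' -> T G' t s n.
Proof.
  intros HT H. eapply (Tconv (env_union G (env_diff G' G))); [apply Tweak; exact HT| |apply ty_eqv_refl].
  apply env_eqv_sym, env_diff_spec, H.
Qed.

Lemma T_env G G' t s n : T G t s n -> env_eqv G G' -> T G' t s n.
Proof. intros; eapply Tconv; eauto using ty_eqv_refl. Qed.

Lemma T_ty G t s s' n : T G t s n -> ty_eqv s s' -> T G t s' n.
Proof. intros; eapply Tconv; eauto using env_eqv_refl. Qed.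

Lemma TL_env G G' t M n : TL G t M n -> env_eqv G G' -> TL G' t M n.
Proof. intros H E. destruct H. constructor. econstructor; eauto. eapply env_eqv_trans; eauto using env_eqv_sym. Qed.

Lemma TL_weak G G' t M n : TL G t M n -> env_le G G' -> TL G' t M n.
Proof.
  intros H E. destruct H. constructor.
  apply (TLcons G' (env_diff G' G2) G2 t s M n1 n2); auto.
  - assert (env_le G2 G') by envs. apply env_diff_spec in H2. envs.
  - eapply T_weak; eauto. assert (env_le G2 G') by envs. apply env_diff_spec in H2.
    assert (HH : forall x a, cnt a (G' x) = cnt a (G2 x) + cnt a (env_diff G' G2 x)).
    { rewrite env_eqv_iff in H2. intros x a; rewrite H2. unfold env_union. now rewrite cnt_app. }
    intros x a. specialize (HH x a). rewrite env_eqv_iff in H. specialize (H x a). specialize (E x a).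
    unfold env_union in *. rewrite cnt_app in H. lia.
Qed.

Lemma TL_one G t s n : T G t s n -> TL G t [s] n.
Proof. intro H. rewrite <- (Nat.add_0_r n). econstructor; [|exact H|apply (TLnil empty_env)]. envs. Qed.

Lemma TL_nil_inv G t n : TL G t [] n -> n = 0.
Proof. intro H; inversion H; auto. Qed.

Lemma TL_cons_inv G t s M n : TL G t (s :: M) n ->
  exists G1 G2 n1 n2, env_eqv G (env_union G1 G2) /\ T G1 t s n1 /\ TL G2 t M n2 /\ n = n1 + n2.
Proof. intro H; inversion H; subst. eexists _, _, _, _; eauto. Qed.

Lemma TL_one_inv G t s n : TL G t [s] n -> T G t s n.
Proof.
  intro H. apply TL_cons_inv in H as [G1 [G2 [n1 [n2 [E [H1 [H2 ->]]]]]]].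
  apply TL_nil_inv in H2; subst. rewrite Nat.add_0_r. eapply T_weak; eauto. envs.
Qed.

Lemma TL_app G1 G2 t A B n1 n2 : TL G1 t A n1 -> TL G2 t B n2 -> TL (env_union G1 G2) t (A ++ B) (n1 + n2).
Proof.
  intro H. revert G2 B n2. induction H; intros G' B n' H'; simpl.
  - eapply TL_weak; eauto. envs.
  - rewrite <- Nat.add_assoc. econstructor; [|exact H0|apply IHTL; exact H']. envs.
Qed.

Lemma TL_split A : forall B D u m, TL D u (A ++ B) m ->
  exists D1 D2 m1 m2, TL D1 u A m1 /\ TL D2 u B m2 /\ env_eqv D (env_union D1 D2) /\ m = m1 + m2.
Proof.
  induction A as [|a A IH]; intros B D u m H; simpl in *.
  - exists empty_env, D, 0, m. repeat split; auto. constructor. envs.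
  - apply TL_cons_inv in H as [G1 [G2 [n1 [n2 [E [H1 [H2 ->]]]]]]].
    destruct (IH _ _ _ _ H2) as [D1 [D2 [m1 [m2 [Ha [Hb [E' ->]]]]]]].
    exists (env_union G1 D1), D2, (n1 + m1), m2. repeat split; auto.
    + econstructor; eauto. apply env_eqv_refl.
    + envs.
    + lia.
Qed.

Lemma TL_perm M M' : Permutation M M' -> forall G t n, TL G t M n -> TL G t M' n.
Proof.
  induction 1; intros G t n HT; auto.
  - apply TL_cons_inv in HT as [G1 [G2 [n1 [n2 [E [H1 [H2 ->]]]]]]]. econstructor; eauto.
  - apply TL_cons_inv in HT as [G1 [G2 [n1 [n2 [E [H1 [H2 ->]]]]]]].
    apply TL_cons_inv in H2 as [G3 [G4 [n3 [n4 [E' [H3 [H4 ->]]]]]]].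
    replace (n1 + (n3 + n4)) with (n3 + (n1 + n4)) by lia.
    econstructor; [|exact H3|econstructor; [|exact H1|exact H4]]; [|apply env_eqv_refl]. envs.
Qed.

Lemma TL_F2 M M' : Forall2 ty_eqv M M' -> forall G t n, TL G t M n -> TL G t M' n.
Proof.
  induction 1; intros G t n H'; auto.
  apply TL_cons_inv in H' as [G1 [G2 [n1 [n2 [E [H1 [H2 ->]]]]]]]. econstructor; eauto using T_ty.
Qed.

Lemma TL_mty G t M M' n : TL G t M n -> mty_eqv M M' -> TL G t M' n.
Proof. intros H [Z [P F]]. eapply TL_F2; eauto. eapply TL_perm; eauto. Qed.

Ltac cases := repeat match goal with
 | |- context [?a <? ?b] => destruct (Nat.ltb_spec a b)
 | |- context [?a =? ?b] => destruct (Nat.eqb_spec a b)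
 | |- context [env_ext ?M ?G (?a - ?b)] => let e := fresh "e" in destruct (a - b) eqn:e; cbn [env_ext]
 end.
Ltac fin := first [reflexivity | lia | (f_equal; lia) | (exfalso; lia) | idtac].

Ltac pw := apply env_eqv_pw; let y := fresh "y" in intro y;
  unfold shift, down, env_single, env_union, empty_env;
  try (match goal with |- context [env_ext _ _ y] => destruct y as [|y] end);
  cbn [env_ext]; cases; cbn [env_ext]; fin.

Lemma shift_ext k c M G : env_eqv (env_ext M (shift k c G)) (shift k (S c) (env_ext M G)).
Proof. pw. Qed.
Lemma shift_union k c G H : env_eqv (shift k c (env_union G H)) (env_union (shift k c G) (shift k c H)).
Proof. pw. Qed.
Lemma shift_eqv k c G G' : env_eqv G G' -> env_eqv (shift k c G) (shift k c G').
Proof. intro H. rewrite env_eqv_iff in *. intros x a. unfold shift. cases; auto. Qed.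
Lemma shift_single k c x s : env_eqv (shift k c (env_single x s)) (env_single (if x <? c then x else x + k) s).
Proof. pw. Qed.
Lemma down_union k G H : env_eqv (down k (env_union G H)) (env_union (down k G) (down k H)).
Proof. pw. Qed.
Lemma down_eqv k G G' : env_eqv G G' -> env_eqv (down k G) (down k G').
Proof. intro H. rewrite env_eqv_iff in *. intros x a. unfold down. cases; auto. Qed.
Lemma down_ext k M G D : env_eqv (env_union (down (S k) (env_ext M G)) (shift (S k) 0 D))
   (env_ext M (env_union (down k G) (shift k 0 D))).
Proof. apply env_eqv_iff. intros [|y] a; unfold env_union, down, shift, env_ext; simpl; cases; simpl; rewrite ?cnt_app; simpl; try lia.
  all: try (replace (S y - S k) with (y - k) by lia); lia. Qed.
Lemma shift10 D : env_eqv (shift 1 0 D) (env_ext [] D).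
Proof. pw. Qed.
Lemma shift11 X L : env_eqv (shift 1 1 (env_ext X L)) (env_ext X (shift 1 0 L)).
Proof. pw. Qed.
Lemma shift00 D : env_eqv (shift 0 0 D) D.
Proof. pw. Qed.
Lemma down0 M G : env_eqv (down 0 (env_ext M G)) G.
Proof. pw. Qed.
Lemma ext_union X Y G H : env_eqv (env_union (env_ext X G) (env_ext Y H)) (env_ext (X ++ Y) (env_union G H)).
Proof. pw. Qed.
Lemma ext_eqv M M' G G' : mty_eqv M M' -> env_eqv G G' -> env_eqv (env_ext M G) (env_ext M' G').
Proof. intros H1 H2 [|y]; simpl; auto. Qed.

Lemma lift_T_TL :
  (forall G t s n, T G t s n -> forall k c, T (shift k c G) (lift k c t) s n) /\
  (forall G t M n, TL G t M n -> forall k c, TL (shift k c G) (lift k c t) M n).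
Proof.
  apply T_TL_mind; intros.
  - eapply T_env; [|apply env_eqv_sym, shift_single]. simpl. destruct (x <? c); constructor.
  - simpl. constructor. eapply T_env; [apply H|apply env_eqv_sym, shift_ext].
  - simpl. eapply T_env; [econstructor; eauto|].
    + eapply T_env; [apply H1|]. apply env_eqv_sym, shift_ext.
    + eapply env_eqv_trans; [|apply env_eqv_sym, shift_union].
      pose proof (shift_union k c D L). envs.
  - eapply Tconv; eauto. apply shift_eqv; auto.
  - eapply T_env; [apply Tweak; eauto|apply env_eqv_sym, shift_union].
  - constructor.
  - econstructor; eauto. eapply env_eqv_trans; [apply shift_eqv; exact e|apply shift_union].
Qed.

Fixpoint msz (t : tm) : nat :=
  match t with Var _ => 1 | Lam t => S (msz t) | App t u r => 2 * msz t + msz u + msz r end.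

Lemma msz_lift t : forall k c, msz (lift k c t) = msz t.
Proof. induction t; intros; simpl; auto. destruct (n <? c); auto. Qed.
Lemma msz_pos t : msz t >= 1.
Proof. induction t; simpl; lia. Qed.

Lemma env_eqv_at G G' k : env_eqv G G' -> mty_eqv (G k) (G' k).
Proof. auto. Qed.

Lemma mty_eqv_sym M N : mty_eqv M N -> mty_eqv N M.
Proof. rewrite !mty_eqv_iff. intros H a; auto. Qed.

Lemma subst_T_TL u :
  (forall G t s n, T G t s n -> forall k D m, TL D u (G k) m ->
     exists n', n' <= n + m /\ T (env_union (down k G) (shift k 0 D)) (subst k u t) s n') /\
  (forall G t M n, TL G t M n -> forall k D m, TL D u (G k) m ->
     exists n', n' <= n + m /\ TL (env_union (down k G) (shift k 0 D)) (subst k u t) M n').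
Proof.
  apply T_TL_mind.
  -
    intros x s k D m HD. simpl subst. unfold env_single at 1 in HD.
    destruct (Nat.ltb_spec x k).
    + destruct (Nat.eqb_spec k x); [lia|]. apply TL_nil_inv in HD; subst.
      exists 1; split; [lia|]. eapply T_weak; [constructor|].
      assert (E : env_eqv (down k (env_single x s)) (env_single x s)) by pw. envs.
    + destruct (Nat.eqb_spec x k).
      * subst. rewrite Nat.eqb_refl in HD. apply TL_one_inv in HD.
        exists m; split; [lia|]. eapply T_weak; [apply (proj1 lift_T_TL); exact HD|]. envs.
      * destruct (Nat.eqb_spec k x); [lia|]. apply TL_nil_inv in HD; subst.
        exists 1; split; [lia|]. eapply T_weak; [constructor|].
        assert (E : env_eqv (down k (env_single x s)) (env_single (x - 1) s)) by pw. envs.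
  -
    intros G M t s n Ht IH k D m HD.
    destruct (IH (S k) D m HD) as [n' [Hn H']].
    exists (S n'); split; [lia|]. simpl. constructor. eapply T_env; [exact H'|apply down_ext].
  -
    intros G D1 L t1 u1 r s As Mt Mu n1 n2 n3 ch1 Ht1 IH1 ch2 Hu1 IH2 Hr IH3 k D m HD.
    unfold env_union at 1 in HD.
    destruct (TL_split _ _ _ _ _ HD) as [Da [Dbc [ma [mbc [Ha [Hbc [E1 ->]]]]]]].
    destruct (TL_split _ _ _ _ _ Hbc) as [Db [Dc [mb [mc [Hb [Hc [E2 ->]]]]]]].
    destruct (IH1 k Da ma Ha) as [n1' [Hn1 H1]].
    destruct (IH2 k Db mb Hb) as [n2' [Hn2 H2]].
    destruct (IH3 (S k) Dc mc Hc) as [n3' [Hn3 H3]].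
    exists (S (n1' + n2' + n3')); split; [lia|]. simpl.
    eapply T_env; [econstructor; [exact ch1|exact H1|exact ch2|exact H2|];
       eapply T_env; [exact H3|apply down_ext]|].
    pose proof (down_union k G (env_union D1 L)). pose proof (down_union k D1 L).
    pose proof (shift_eqv k 0 _ _ E1). pose proof (shift_eqv k 0 _ _ E2).
    pose proof (shift_union k 0 Da Dbc). pose proof (shift_union k 0 Db Dc).
    envs.
  -
    intros G G' t s s' n Ht IH EG Es k D m HD.
    assert (HD' : TL D u (G k) m) by (eapply TL_mty; [exact HD|apply mty_eqv_sym; apply EG]).
    destruct (IH k D m HD') as [n' [Hn H']]. exists n'; split; auto.
    eapply Tconv; [exact H'| |exact Es]. pose proof (down_eqv k _ _ EG). envs.
  -
    intros G H t s n Ht IH k D m HD. unfold env_union at 1 in HD.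
    destruct (TL_split _ _ _ _ _ HD) as [Da [Db [ma [mb [Ha [Hb [E1 ->]]]]]]].
    destruct (IH k Da ma Ha) as [n' [Hn H']]. exists n'; split; [lia|].
    eapply T_weak; [exact H'|].
    pose proof (down_union k G H). pose proof (shift_eqv k 0 _ _ E1). pose proof (shift_union k 0 Da Db).
    envs.
  - intros G t k D m HD. exists 0; split; [lia|constructor].
  - intros G G1 G2 t s M n1 n2 EG Ht IH1 HM IH2 k D m HD.
    assert (HD' : TL D u (G1 k ++ G2 k) m) by (eapply TL_mty; [exact HD|apply EG]).
    destruct (TL_split _ _ _ _ _ HD') as [Da [Db [ma [mb [Ha [Hb [E1 ->]]]]]]].
    destruct (IH1 k Da ma Ha) as [n1' [Hn1 H1]].
    destruct (IH2 k Db mb Hb) as [n2' [Hn2 H2]].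
    exists (n1' + n2'); split; [lia|]. econstructor; [|exact H1|exact H2].
    pose proof (down_eqv k _ _ EG). pose proof (down_union k G1 G2).
    pose proof (shift_eqv k 0 _ _ E1). pose proof (shift_union k 0 Da Db). envs.
Qed.

Lemma mty_eqv_refl M : mty_eqv M M.
Proof. apply mty_eqv_iff; auto. Qed.

Lemma ext_le M G G' : env_le G G' -> env_le (env_ext M G) (env_ext M G').
Proof. intros H [|x] a; simpl; auto. Qed.

Lemma arr_eqv_inv M s M' s' : ty_eqv (Arr M s) (Arr M' s') -> mty_eqv M M' /\ ty_eqv s s'.
Proof.
  intro H. destruct (arr_inv _ _ _ H) as [N [M'' [s'' [E [P [F Hs]]]]]]. injection E; intros; subst.
  split; auto. exists N; auto.
Qed.

Lemma gen_lam G t A n : T G (Lam t) A n ->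
  exists M s n0, n = S n0 /\ ty_eqv (Arr M s) A /\ T (env_ext M G) t s n0.
Proof.
  intro H. remember (Lam t) as v. revert t Heqv. induction H; intros t0 Hv; try discriminate.
  - injection Hv; intros; subst. exists M, s, n. repeat split; auto using ty_eqv_refl.
  - destruct (IHT t0 Hv) as [M [s0 [n0 [-> [E HT]]]]]. exists M, s0, n0. repeat split.
    + eapply ty_eqv_trans; eauto.
    + eapply T_env; [exact HT|]. apply ext_eqv; auto using mty_eqv_refl.
  - destruct (IHT t0 Hv) as [M [s0 [n0 [-> [E HT]]]]]. exists M, s0, n0. repeat split; auto.
    eapply T_weak; [exact HT|]. apply ext_le. envs.
Qed.

Lemma gen_app G t u r s n : T G (App t u r) s n ->
  exists G1 D1 L1 As Mt Mu n1 n2 n3, n = S (n1 + n2 + n3) /\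
    is_ch (arrows As) Mt /\ TL G1 t Mt n1 /\ is_ch (concat (map fst As)) Mu /\ TL D1 u Mu n2 /\
    T (env_ext (map snd As) L1) r s n3 /\ env_le (env_union G1 (env_union D1 L1)) G.
Proof.
  intro H. remember (App t u r) as v. revert t u r Heqv. induction H; intros t0 u0 r0 Hv; try discriminate.
  - injection Hv; intros; subst. eexists _, _, _, _, _, _, _, _, _. repeat split; eauto. apply env_le_refl.
  - destruct (IHT _ _ _ Hv) as [G1 [D1 [L1 [As [Mt [Mu [n1 [n2 [n3 [-> [c1 [h1 [c2 [h2 [h3 hle]]]]]]]]]]]]]]].
    eexists _, _, _, _, _, _, _, _, _. repeat split; eauto using T_ty. envs.
  - destruct (IHT _ _ _ Hv) as [G1 [D1 [L1 [As [Mt [Mu [n1 [n2 [n3 [-> [c1 [h1 [c2 [h2 [h3 hle]]]]]]]]]]]]]]].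
    eexists _, _, _, _, _, _, _, _, _. repeat split; eauto. envs.
Qed.

Lemma is_ch_nonnil X M : is_ch X M -> M <> [].
Proof. intros [[H ->]|[_ [tau ->]]]; auto. discriminate. Qed.

Lemma ch_use X M G t n : is_ch X M -> TL G t M n -> exists k, k <= n /\ TL G t X k.
Proof. intros [[_ ->]|[-> _]] H; eauto. exists 0; split; [lia|constructor]. Qed.

Lemma ch_combine t X Y Mx My Ex Ey a b : is_ch X Mx -> TL Ex t Mx a -> is_ch Y My -> TL Ey t My b ->
  exists M E c, is_ch (X ++ Y) M /\ TL E t M c /\ env_le E (env_union Ex Ey) /\ c <= a + b.
Proof.
  intros [[nX ->]|[-> [tx ->]]] HX [[nY ->]|[-> [ty ->]]] HY.
  - exists (X ++ Y), (env_union Ex Ey), (a + b). split; [|split; [|split]].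
    + left; split; auto. destruct X; simpl; [contradiction|discriminate].
    + apply TL_app; auto.
    + apply env_le_refl.
    + lia.
  - exists X, Ex, a. rewrite app_nil_r. split; [|split; [|split]]; auto; [left; auto|envs|lia].
  - exists Y, Ey, b. split; [|split; [|split]]; auto; [left; auto|envs|lia].
  - exists [tx], Ex, a. split; [|split; [|split]]; auto; [right; simpl; eauto|envs|lia].
Qed.

Lemma beta_TL t u As : forall G1 D1 n1 n2, TL G1 (Lam t) (arrows As) n1 ->
  TL D1 u (concat (map fst As)) n2 ->
  exists E k, TL E (subst 0 u t) (map snd As) k /\ k <= n1 + n2 /\ env_le E (env_union G1 D1).
Proof.
  induction As as [|[M tau] As IH]; intros G1 D1 n1 n2 HL HU; simpl in *.
  - exists G1, 0. repeat split; [constructor|lia|envs].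
  - apply TL_cons_inv in HL as [Ga [Gb [na [nb [E1 [Ha [Hb ->]]]]]]].
    destruct (TL_split _ _ _ _ _ HU) as [Da [Db [ma [mb [HDa [HDb [E2 ->]]]]]]].
    destruct (gen_lam _ _ _ _ Ha) as [M0 [s0 [n0 [-> [Ety Hbody]]]]].
    apply arr_eqv_inv in Ety as [EM Es].
    assert (Hb' : T (env_ext M Ga) t tau n0).
    { eapply Tconv; [exact Hbody| |exact Es]. apply ext_eqv; auto using env_eqv_refl. }
    destruct (proj1 (subst_T_TL u) _ _ _ _ Hb' 0 Da ma HDa) as [n' [Hn' Hs]].
    destruct (IH _ _ _ _ Hb HDb) as [E [k [HE [Hk Hle]]]].
    eexists _, (n' + k). repeat split; [econstructor; [apply env_eqv_refl|exact Hs|exact HE]|lia|].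
    pose proof (down0 M Ga). pose proof (shift00 Da). envs.
Qed.

Lemma pi_agg t u r : forall Rs G1 n1, TL G1 (App t u r) Rs n1 -> Rs <> [] ->
  exists Bs Mt' Mu' Et Eu Er a b c, is_ch (arrows Bs) Mt' /\ TL Et t Mt' a /\
    is_ch (concat (map fst Bs)) Mu' /\ TL Eu u Mu' b /\ TL (env_ext (map snd Bs) Er) r Rs c /\
    env_le (env_union Et (env_union Eu Er)) G1 /\ a + b + c + length Rs <= n1.
Proof.
  induction Rs as [|rho Rs IH]; intros G1 n1 H Hne; [contradiction|].
  apply TL_cons_inv in H as [Ga [Gb [na [nb [E [Hh [Ht ->]]]]]]].
  destruct (gen_app _ _ _ _ _ _ Hh) as [Ga1 [Da1 [La1 [Bs1 [Mt1 [Mu1 [x [y [z [-> [c1 [h1 [c2 [h2 [h3 hle]]]]]]]]]]]]]]].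
  destruct Rs as [|rho' Rs'].
  - exists Bs1, Mt1, Mu1, Ga1, Da1, La1, x, y, z. repeat split; auto using TL_one. envs. simpl; lia.
  - destruct (IH _ _ Ht ltac:(discriminate)) as
      [Bs2 [Mt2 [Mu2 [Et2 [Eu2 [Er2 [a2 [b2 [cc2 [d1 [g1 [d2 [g2 [g3 [gle gsz]]]]]]]]]]]]]]].
    destruct (ch_combine _ _ _ _ _ _ _ _ _ c1 h1 d1 g1) as [M [Et [a' [cM [hM [leM szM]]]]]].
    destruct (ch_combine _ _ _ _ _ _ _ _ _ c2 h2 d2 g2) as [U [Eu [b' [cU [hU [leU szU]]]]]].
    exists (Bs1 ++ Bs2), M, U, Et, Eu, (env_union La1 Er2), a', b', (z + cc2).
    unfold arrows in *. rewrite map_app. rewrite map_app, concat_app. repeat split; auto.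
    + rewrite map_app. eapply TL_env; [econstructor; [apply env_eqv_refl|exact h3|exact g3]|].
      apply ext_union.
    + envs.
    + simpl in *. lia.
Qed.

Lemma TL_SR t t' : (forall G s n, T G t s n -> exists n', T G t' s n' /\ n' <= n /\ (n' < n \/ msz t' < msz t)) ->
  forall G M n, TL G t M n -> exists n', TL G t' M n' /\ n' <= n /\ (M = [] \/ n' < n \/ msz t' < msz t).
Proof.
  intros HS G M n H. induction H.
  - exists 0. split; [constructor|split; [lia|left; auto]].
  - destruct (HS _ _ _ H0) as [n1' [K1 [Hn1 Ho1]]]. destruct (IHTL HS) as [n2' [K2 [Hn2 Ho2]]].
    exists (n1' + n2'). split; [econstructor; eauto|split; [lia|right]]. destruct Ho1; [left; lia|right; auto].
Qed.

Lemma pi_env X Er D1 L1 : env_eqv (env_union (env_ext X Er) (env_union (env_ext [] D1) (env_ext [] L1)))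
  (env_ext X (env_union Er (env_union D1 L1))).
Proof. apply env_eqv_iff. intros [|y] a; unfold env_union; simpl; rewrite ?cnt_app; simpl; lia. Qed.

Lemma SR t t' : step t t' -> forall G s n, T G t s n ->
  exists n', T G t' s n' /\ n' <= n /\ (n' < n \/ msz t' < msz t).
Proof.
  induction 1; intros G s n HT.
  -
    destruct (gen_app _ _ _ _ _ _ HT) as [G1 [D1 [L1 [As [Mt [Mu [n1 [n2 [n3 [-> [c1 [h1 [c2 [h2 [h3 hle]]]]]]]]]]]]]]].
    destruct (ch_use _ _ _ _ _ c1 h1) as [k1 [Hk1 H1]].
    destruct (ch_use _ _ _ _ _ c2 h2) as [k2 [Hk2 H2]].
    destruct (beta_TL _ _ _ _ _ _ _ H1 H2) as [E [k [HE [Hk HEle]]]].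
    destruct (proj1 (subst_T_TL (subst 0 u t)) _ _ _ _ h3 0 E k HE) as [n' [Hn' Hs]].
    exists n'. repeat split; [|lia|lia]. eapply T_weak; [exact Hs|].
    pose proof (down0 (map snd As) L1). pose proof (shift00 E). envs.
  -
    destruct (gen_app _ _ _ _ _ _ HT) as [G1 [D1 [L1 [As [Mt [Mu [n1 [n2 [n3 [-> [c1 [h1 [c2 [h2 [h3 hle]]]]]]]]]]]]]]].
    destruct (pi_agg _ _ _ _ _ _ h1 (is_ch_nonnil _ _ c1)) as
      [Bs [Mt' [Mu' [Et [Eu [Er [a [b [c [d1 [g1 [d2 [g2 [g3 [gle gsz]]]]]]]]]]]]]]].
    assert (Hu' : TL (env_ext [] D1) (lift 1 0 u') Mu n2).
    { eapply TL_env; [apply (proj2 lift_T_TL); exact h2|apply shift10]. }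
    assert (Hr' : T (env_ext (map snd As) (env_ext [] L1)) (lift 1 1 r') s n3).
    { eapply T_env; [apply (proj1 lift_T_TL); exact h3|]. eapply env_eqv_trans; [apply shift11|].
      apply ext_eqv; [apply mty_eqv_refl|apply shift10]. }
    assert (Hin : T (env_ext (map snd Bs) (env_union Er (env_union D1 L1)))
                    (App r (lift 1 0 u') (lift 1 1 r')) s (S (c + n2 + n3))).
    { eapply T_env; [econstructor; [exact c1|exact g3|exact c2|exact Hu'|exact Hr']|apply pi_env]. }
    exists (S (a + b + S (c + n2 + n3))).
    assert (length Mt >= 1) by (destruct Mt; [destruct (is_ch_nonnil _ _ c1); auto|simpl; lia]).
    repeat split; [|lia|].
    + eapply T_weak; [econstructor; [exact d1|exact g1|exact d2|exact g2|exact Hin]|]. envs.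
    + right. simpl. rewrite !msz_lift. pose proof (msz_pos t). lia.
  -
    destruct (gen_lam _ _ _ _ HT) as [M [s0 [n0 [-> [E Hb]]]]].
    destruct (IHstep _ _ _ Hb) as [n' [H' [Hn Ho]]].
    exists (S n'). repeat split; [eapply T_ty; [constructor; exact H'|exact E]|lia|simpl; lia].
  - destruct (gen_app _ _ _ _ _ _ HT) as [G1 [D1 [L1 [As [Mt [Mu [n1 [n2 [n3 [-> [c1 [h1 [c2 [h2 [h3 hle]]]]]]]]]]]]]]].
    destruct (TL_SR _ _ IHstep _ _ _ h1) as [n1' [K1 [Hn Ho]]].
    exists (S (n1' + n2 + n3)). repeat split; [eapply T_weak; [econstructor; eauto|exact hle]|lia|].
    destruct Ho as [Ho|Ho]; [destruct (is_ch_nonnil _ _ c1 Ho)|]. simpl; lia.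
  - destruct (gen_app _ _ _ _ _ _ HT) as [G1 [D1 [L1 [As [Mt [Mu [n1 [n2 [n3 [-> [c1 [h1 [c2 [h2 [h3 hle]]]]]]]]]]]]]]].
    destruct (TL_SR _ _ IHstep _ _ _ h2) as [n2' [K2 [Hn Ho]]].
    exists (S (n1 + n2' + n3)). repeat split; [eapply T_weak; [econstructor; eauto|exact hle]|lia|].
    destruct Ho as [Ho|Ho]; [destruct (is_ch_nonnil _ _ c2 Ho)|]. simpl; lia.
  - destruct (gen_app _ _ _ _ _ _ HT) as [G1 [D1 [L1 [As [Mt [Mu [n1 [n2 [n3 [-> [c1 [h1 [c2 [h2 [h3 hle]]]]]]]]]]]]]]].
    destruct (IHstep _ _ _ h3) as [n3' [K3 [Hn Ho]]].
    exists (S (n1 + n2 + n3')). repeat split; [eapply T_weak; [econstructor; eauto|exact hle]|lia|].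
    simpl; lia.
Qed.

Lemma T_SN : forall n t G s, T G t s n -> SN t.
Proof.
  intro n. induction n as [n IHn] using lt_wf_ind.
  assert (forall k t G s, msz t < k -> T G t s n -> SN t).
  { induction k; intros t G s Hk HT; [lia|]. constructor. intros t' Hst.
    destruct (SR _ _ Hst _ _ _ HT) as [n' [HT' [Hle Ho]]].
    destruct (Nat.lt_ge_cases n' n) as [Hlt|Hge].
    - eapply IHn; eauto.
    - assert (n' = n) by lia. subst n'. eapply IHk; [|exact HT']. lia. }
  intros t G s HT. eapply H; [|exact HT]. eauto.
Qed.

Scheme typ_mind := Induction for typ Sort Prop with typm_mind := Induction for typm Sort Prop.
Combined Scheme typ_typm_mind from typ_mind, typm_mind.

Lemma typ_T : (forall G t s, typ G t s -> exists n, T G t s n) /\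
              (forall G t M, typm G t M -> exists n, TL G t M n).
Proof.
  apply typ_typm_mind; intros.
  - exists 1; constructor.
  - destruct H as [n H]. exists (S n); constructor; auto.
  - destruct H as [n1 K1], H0 as [n2 K2], H1 as [n3 K3].
    exists (S (n1 + n2 + n3)). econstructor; eauto.
  - destruct H as [n H]. exists n. eapply Tconv; eauto.
  - destruct H as [n H]. exists n. apply TL_one; auto.
  - destruct H as [n1 K1], H0 as [n2 K2]. exists (n1 + n2). econstructor; eauto. apply env_eqv_refl.
  - destruct H as [n H]. exists n. eapply TL_mty; [eapply TL_env|]; eauto.
Qed.

Theorem mainTheorem16 : forall (t : tm) (G : env) (s : ty), typ G t s -> SN t.
Proof.
  intros t G s H. destruct (proj1 typ_T _ _ _ H) as [n Hn]. eapply T_SN; eauto.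
Qed.
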